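(* Every skewly representable function $f:\mathbb{N}^k\to\mathbb{N}$ with finite range is strictly representable.
   Context: We work in the simply typed $\lambda$-calculus (type assignment to untyped $\lambda$-terms) with a single base type $o$, with $\beta\eta$-conversion as equality. For a type $\tau$, $\omega_\tau=(\tau\to\tau)\to\tau\to\tau$. The Church numeral of $n$ is $\rho(n)=\lambda f x.f^{n}x$; every type assignable to all Church numerals is of the form $\omega_\tau$. A function $f:\mathbb{N}^k\to\mathbb{N}$ is skewly representable if there exist a term $E$ and types $\alpha_1,\dots,\alpha_k,\beta$ (each a type of Church numerals) with $\vdash E:\alpha_1\to\cdots\to\alpha_k\to\beta$ such that $E\,\rho(n_1)\cdots\rho(n_k)=_{\beta\eta}\rho(f(n_1,\dots,n_k))$ for all $n_1,\dots,n_k$, where $\rho(n_i)$ is typed with $\alpha_i$. It is strictly representable if this holds with $\alpha_1=\cdots=\alpha_k=\beta=\omega_\tau$ for some type $\tau$. *)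

(* Defs.v *)
From mathcomp Require Import all_boot.
From Stdlib Require Import Relation_Operators.
Set Implicit Arguments. Unset Strict Implicit. Unset Printing Implicit Defensive.

Inductive ty : Type := TO : ty | Arr : ty -> ty -> ty.

Definition omega (t : ty) : ty := Arr (Arr t t) (Arr t t).

Inductive tm : Type := Var : nat -> tm | App : tm -> tm -> tm | Lam : tm -> tm.

Fixpoint lift (d c : nat) (t : tm) : tm :=
  match t with
  | Var n => if n < c then Var n else Var (n + d)
  | App u v => App (lift d c u) (lift d c v)
  | Lam u => Lam (lift d c.+1 u)
  end.

(* subst j s t : replace index j by s in t, decrementing indices above j *)
Fixpoint subst (j : nat) (s : tm) (t : tm) : tm :=
  match t with
  | Var n => if n == j then s else if j < n then Var n.-1 else Var n
  | App u v => App (subst j s u) (subst j s v)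
  | Lam u => Lam (subst j.+1 (lift 1 0 s) u)
  end.

Inductive step : tm -> tm -> Prop :=
  | step_beta t s : step (App (Lam t) s) (subst 0 s t)
  | step_eta u : step (Lam (App (lift 1 0 u) (Var 0))) u
  | step_appl u u' v : step u u' -> step (App u v) (App u' v)
  | step_appr u v v' : step v v' -> step (App u v) (App u v')
  | step_lam u u' : step u u' -> step (Lam u) (Lam u').

Definition betaeta : tm -> tm -> Prop := clos_refl_sym_trans tm step.

(* Curry-style type assignment; contexts are lists (index 0 = innermost). *)
Fixpoint lookup (G : seq ty) (n : nat) : option ty :=
  match G, n with
  | [::], _ => None
  | A :: _, 0 => Some A
  | _ :: G', n'.+1 => lookup G' n'
  end.

Inductive has_type : seq ty -> tm -> ty -> Prop :=
  | ht_var G n A : lookup G n = Some A -> has_type G (Var n) A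
  | ht_app G u v A B : has_type G u (Arr A B) -> has_type G v A -> has_type G (App u v) B
  | ht_lam G u A B : has_type (A :: G) u B -> has_type G (Lam u) (Arr A B).

Definition church (n : nat) : tm := Lam (Lam (iter n (App (Var 1)) (Var 0))).

Definition numeral_type (A : ty) : Prop := forall n, has_type [::] (church n) A.

Definition arrows (As : seq ty) (B : ty) : ty := foldr Arr B As.

Definition apps (E : tm) (ts : seq tm) : tm := foldl App E ts.

Definition skewly_representable (k : nat) (f : k.-tuple nat -> nat) : Prop :=
  exists (E : tm) (al : k.-tuple ty) (b : ty),
    (forall i : 'I_k, numeral_type (tnth al i)) /\ numeral_type b /\
    has_type [::] E (arrows al b) /\
    forall x : k.-tuple nat, betaeta (apps E (map church x)) (church (f x)).

Definition strictly_representable (k : nat) (f : k.-tuple nat -> nat) : Prop :=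
  exists (E : tm) (t : ty),
    has_type [::] E (arrows (nseq k (omega t)) (omega t)) /\
    forall x : k.-tuple nat, betaeta (apps E (map church x)) (church (f x)).

Definition finite_range (k : nat) (f : k.-tuple nat -> nat) : Prop :=
  exists s : seq nat, forall x : k.-tuple nat, f x \in s.

(* Main.v *)
Require Import Defs.
From mathcomp Require Import all_boot zify.
From Stdlib Require Import Relation_Operators.
Import Defs.
Set Implicit Arguments. Unset Strict Implicit. Unset Printing Implicit Defensive.

Fixpoint closed_at (n : nat) (t : tm) : bool :=
  match t with
  | Var m => m < n
  | App u v => closed_at n u && closed_at n v
  | Lam u => closed_at n.+1 u
  end.

Lemma closed_mono t n n' : closed_at n t -> n <= n' -> closed_at n' t.
Proof.
elim: t n n' => [m|u IHu v IHv|u IHu] n n' /=.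
- move=> h1 h2; lia.
- case/andP=> h1 h2 le; by rewrite (IHu _ _ h1 le) (IHv _ _ h2 le).
- move=> h le; apply: IHu h _; by rewrite ltnS.
Qed.

Lemma lift_closed t n d c : closed_at n t -> n <= c -> lift d c t = t.
Proof.
elim: t n c => [m|u IHu v IHv|u IHu] n c /=.
- move=> h1 h2; have -> : m < c by lia. by [].
- case/andP=> h1 h2 le; by rewrite (IHu _ _ h1 le) (IHv _ _ h2 le).
- move=> h le; by rewrite (IHu _ _ h).
Qed.

Lemma subst_closed t n j s : closed_at n t -> n <= j -> subst j s t = t.
Proof.
elim: t n j s => [m|u IHu v IHv|u IHu] n j s /=.
- move=> h1 h2; have -> : (m == j) = false by apply/eqP; lia.
  have -> : (j < m) = false by lia. by [].
- case/andP=> h1 h2 le; by rewrite (IHu _ _ _ h1 le) (IHv _ _ _ h2 le).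
- move=> h le; by rewrite (IHu _ _ _ h).
Qed.

Lemma lift_closed0 t d c : closed_at 0 t -> lift d c t = t.
Proof. move=> h; exact: lift_closed h _. Qed.
Lemma subst_closed0 t j s : closed_at 0 t -> subst j s t = t.
Proof. move=> h; exact: subst_closed h _. Qed.

Lemma lift0 t c : lift 0 c t = t.
Proof.
elim: t c => [m|u IHu v IHv|u IHu] c /=; last by rewrite IHu.
- by case: ifP => _ //; rewrite addn0.
- by rewrite IHu IHv.
Qed.

Lemma lift_lift t d d' c c' : c <= c' -> c' <= c + d ->
  lift d' c' (lift d c t) = lift (d + d') c t.
Proof.
elim: t c c' => [m|u IHu v IHv|u IHu] c c' /= h1 h2.
- case: ifP => h /=.
  + have -> : m < c' by lia. by [].
  + have -> : (m + d < c') = false by lia. by rewrite addnA.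
- by rewrite IHu // IHv.
- by rewrite IHu.
Qed.

Lemma subst_lift t s d c j : c <= j -> j <= c + d ->
  subst j s (lift d.+1 c t) = lift d c t.
Proof.
elim: t s c j => [m|u IHu v IHv|u IHu] s c j /= h1 h2.
- case: ifP => h /=.
  + have -> : (m == j) = false by apply/eqP; lia.
    have -> : (j < m) = false by lia. by [].
  + have -> : (m + d.+1 == j) = false by apply/eqP; lia.
    have -> : (j < m + d.+1) by lia. by rewrite addnS.
- by rewrite IHu // IHv.
- by rewrite IHu.
Qed.

Lemma subst_lift0 t s : subst 0 s (lift 1 0 t) = t.
Proof. by rewrite subst_lift // lift0. Qed.

Lemma lift_apps d c h us : lift d c (apps h us) = apps (lift d c h) (map (lift d c) us).
Proof. by elim: us h => //= u us IH h; rewrite /apps /= -/(apps _ _) IH. Qed.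

Lemma subst_apps j s h us : subst j s (apps h us) = apps (subst j s h) (map (subst j s) us).
Proof. by elim: us h => //= u us IH h; rewrite /apps /= -/(apps _ _) IH. Qed.

Lemma apps_cons h u us : apps h (u :: us) = apps (App h u) us.
Proof. by []. Qed.

Lemma apps_rcons h us u : apps h (rcons us u) = App (apps h us) u.
Proof. by rewrite /apps foldl_rcons. Qed.

Lemma lift_iter d c n a b : lift d c (iter n (App a) b) = iter n (App (lift d c a)) (lift d c b).
Proof. by elim: n => //= n ->. Qed.

Lemma subst_iter j s n a b : subst j s (iter n (App a) b) = iter n (App (subst j s a)) (subst j s b).
Proof. by elim: n => //= n ->. Qed.

Lemma closed_apps n h us : closed_at n h -> all (closed_at n) us -> closed_at n (apps h us).
Proof. elim: us h => [|u us IH] h hh /=; first by []. case/andP=> hu hus; apply: (IH (App h u)) => /=; by rewrite ?hh ?hu. Qed.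

Lemma closed_iter n m a b : closed_at n a -> closed_at n b -> closed_at n (iter m (App a) b).
Proof. move=> ha hb; elim: m => //= m ->; by rewrite ha. Qed.

Lemma closed_church n : closed_at 0 (church n).
Proof. rewrite /church /=; apply: closed_iter => //. Qed.

Lemma be_refl t : betaeta t t. Proof. exact: rst_refl. Qed.
Lemma be_sym t u : betaeta t u -> betaeta u t. Proof. exact: rst_sym. Qed.
Lemma be_trans t u v : betaeta t u -> betaeta u v -> betaeta t v. Proof. exact: rst_trans. Qed.
Lemma be_beta t s : betaeta (App (Lam t) s) (subst 0 s t). Proof. apply: rst_step; exact: step_beta. Qed.
Lemma be_eta u : betaeta (Lam (App (lift 1 0 u) (Var 0))) u. Proof. apply: rst_step; exact: step_eta. Qed.
Lemma be_appl u u' v : betaeta u u' -> betaeta (App u v) (App u' v).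
Proof.
elim=> [x y h|x|x y _ IH|x y z _ IH1 _ IH2].
- apply: rst_step; exact: step_appl.
- exact: be_refl.
- exact: be_sym.
- exact: be_trans IH2.
Qed.
Lemma be_appr u v v' : betaeta v v' -> betaeta (App u v) (App u v').
Proof.
elim=> [x y h|x|x y _ IH|x y z _ IH1 _ IH2].
- apply: rst_step; exact: step_appr.
- exact: be_refl.
- exact: be_sym.
- exact: be_trans IH2.
Qed.
Lemma be_lam u u' : betaeta u u' -> betaeta (Lam u) (Lam u').
Proof.
elim=> [x y h|x|x y _ IH|x y z _ IH1 _ IH2].
- apply: rst_step; exact: step_lam.
- exact: be_refl.
- exact: be_sym.
- exact: be_trans IH2.
Qed.
Lemma be_app u u' v v' : betaeta u u' -> betaeta v v' -> betaeta (App u v) (App u' v').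
Proof. move=> h1 h2; apply: be_trans (be_appl _ h1) (be_appr _ h2). Qed.
Lemma be_apps u u' us : betaeta u u' -> betaeta (apps u us) (apps u' us).
Proof. elim: us u u' => [|a us IH] u u' h; first exact: h. rewrite !apps_cons; apply: IH; exact: be_appl. Qed.
Lemma be_apps_nseq h k u u' : betaeta u u' -> betaeta (apps h (nseq k u)) (apps h (nseq k u')).
Proof.
move=> e; elim: k h => [|k IH] h; first exact: be_refl.
change (betaeta (apps (App h u) (nseq k u)) (apps (App h u') (nseq k u'))); apply: be_trans (IH _) _; apply: be_apps; exact: be_appr.
Qed.

Lemma beta_apps B a rest R : betaeta (apps (subst 0 a B) rest) R -> betaeta (apps (Lam B) (a :: rest)) R.
Proof. move=> h; rewrite apps_cons; apply: be_trans h; apply: be_apps; exact: be_beta. Qed.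

Arguments apps : simpl never.
Arguments church : simpl never.

Lemma church_it n f x : betaeta (apps (church n) [:: f; x]) (iter n (App f) x).
Proof.
rewrite /church; apply: beta_apps => /=; apply: beta_apps.
rewrite subst_iter /= subst_iter /= subst_lift0; exact: be_refl.
Qed.
Arguments apps : simpl never.
Arguments church : simpl never.

Lemma lift_lift0 t d d' : lift d' 0 (lift d 0 t) = lift (d + d') 0 t.
Proof. by rewrite lift_lift. Qed.
Lemma subst_liftS t s d j : j <= d -> subst j s (lift d.+1 0 t) = lift d 0 t.
Proof. move=> h; by rewrite subst_lift. Qed.

Lemma closed0 t n : closed_at 0 t -> closed_at n t.
Proof. move=> h; exact: closed_mono h _. Qed.

Ltac clo := repeat match goal with
 | H : is_true (closed_at 0 ?t) |- context [lift ?d ?c ?t] => rewrite (@lift_closed0 t d c H)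
 | H : is_true (closed_at 0 ?t) |- context [subst ?j ?s ?t] => rewrite (@subst_closed0 t j s H)
 end.
Lemma sl10 t s : subst 0 s (lift 1 0 t) = t. Proof. exact: subst_lift0. Qed.
Lemma sl20 t s : subst 0 s (lift 2 0 t) = lift 1 0 t. Proof. exact: subst_liftS. Qed.
Lemma sl21 t s : subst 1 s (lift 2 0 t) = lift 1 0 t. Proof. exact: subst_liftS. Qed.
Lemma sl30 t s : subst 0 s (lift 3 0 t) = lift 2 0 t. Proof. exact: subst_liftS. Qed.
Lemma sl31 t s : subst 1 s (lift 3 0 t) = lift 2 0 t. Proof. exact: subst_liftS. Qed.
Lemma sl32 t s : subst 2 s (lift 3 0 t) = lift 2 0 t. Proof. exact: subst_liftS. Qed.
Lemma ll11 t : lift 1 0 (lift 1 0 t) = lift 2 0 t. Proof. exact: lift_lift0. Qed.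
Lemma ll21 t : lift 1 0 (lift 2 0 t) = lift 3 0 t. Proof. exact: lift_lift0. Qed.
Lemma ll12 t : lift 2 0 (lift 1 0 t) = lift 3 0 t. Proof. exact: lift_lift0. Qed.
Ltac dbs := rewrite ?ll11 ?ll21 ?ll12 ?sl10 ?sl20 ?sl21 ?sl30 ?sl31 ?sl32 ?lift0.
Ltac bstep := apply: beta_apps; rewrite /=; clo; dbs.

Definition SUCC := Lam (Lam (Lam (App (Var 1) (App (App (Var 2) (Var 1)) (Var 0))))).
Lemma SUCCc : closed_at 0 SUCC. Proof. by []. Qed.
Lemma SUCC_eq : SUCC = Lam (Lam (Lam (App (Var 1) (App (App (Var 2) (Var 1)) (Var 0))))).
Proof. by []. Qed.
Lemma church_eq n : church n = Lam (Lam (iter n (App (Var 1)) (Var 0))).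
Proof. by []. Qed.
Opaque SUCC church.

Lemma succ_church n : betaeta (App SUCC (church n)) (church n.+1).
Proof.
have cc := closed_church n.
change (betaeta (apps SUCC [:: church n]) (church n.+1)); rewrite SUCC_eq.
bstep.
rewrite /apps /= church_eq; apply: be_lam; apply: be_lam; rewrite iterS; apply: be_appr.
exact: (church_it n (Var 1) (Var 0)).
Qed.

Fixpoint MAPS j := match j with 0 => Lam (Var 0)
  | j'.+1 => Lam (Lam (App (MAPS j') (App (Var 1) (App SUCC (Var 0))))) end.
Lemma MAPSc j : closed_at 0 (MAPS j).
Proof. elim: j => //= j IH; by rewrite !(closed0 _ IH) (closed0 _ SUCCc). Qed.

Lemma MAPS_red j u cs : size cs = j ->
  betaeta (apps (MAPS j) (u :: cs)) (apps u (map (App SUCC) cs)).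
Proof.
elim: j u cs => [|j IH] u [|c cs] //=.
- move=> _; apply: beta_apps => /=; exact: be_refl.
- case=> hs; have h1 := MAPSc j; have h2 := SUCCc.
  bstep. bstep. exact: IH.
Qed.

Fixpoint DROP m := match m with 0 => Lam (Var 0)
  | m'.+1 => Lam (Lam (App (DROP m') (Var 1))) end.
Lemma DROPc m : closed_at 0 (DROP m).
Proof. elim: m => //= m IH; by rewrite !(closed0 _ IH). Qed.

Lemma DROP_red m u cs : size cs = m -> betaeta (apps (DROP m) (u :: cs)) u.
Proof.
elim: m u cs => [|m IH] u [|c cs] //=.
- move=> _; apply: beta_apps => /=; exact: be_refl.
- case=> hs; have h1 := DROPc m. bstep. bstep. exact: IH.
Qed.

Fixpoint PJ n i := match i with
  | 0 => Lam (Lam (App (DROP n.-1) (App (Var 1) (Var 0))))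
  | i'.+1 => Lam (Lam (App (PJ n.-1 i') (Var 1))) end.
Lemma PJc n i : closed_at 0 (PJ n i).
Proof. elim: i n => [|i IH] n /=; by rewrite ?(closed0 _ (IH _)) ?(closed0 _ (DROPc _)). Qed.

Lemma PJ_red n i K cs : i < n -> size cs = n ->
  betaeta (apps (PJ n i) (K :: cs)) (App K (nth (Var 0) cs i)).
Proof.
elim: i n K cs => [|i IH] n K [|c cs] hi hs //=; try by subst n.
- have h1 := DROPc n.-1. bstep. bstep.
  apply: (DROP_red (App K c)). rewrite -hs //.
- have h1 := PJc n.-1 i. bstep. bstep.
  apply: IH; rewrite -?hs //; by rewrite -hs in hi.
Qed.

Definition TUP cs := Lam (apps (Var 0) cs).
Definition INIT k := TUP (nseq k (church 0)).
Definition STEP k := Lam (Lam (App (Var 1) (App (MAPS k) (Var 0)))).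
Lemma STEPc k : closed_at 0 (STEP k).
Proof. by rewrite /STEP /= !(closed0 _ (MAPSc _)). Qed.

Lemma map_subst_closed j s us : all (closed_at 0) us -> map (subst j s) us = us.
Proof. elim: us => //= u us IH /andP[h1 h2]; by rewrite subst_closed0 // IH. Qed.
Lemma map_lift_closed d c us : all (closed_at 0) us -> map (lift d c) us = us.
Proof. elim: us => //= u us IH /andP[h1 h2]; by rewrite lift_closed0 // IH. Qed.

Lemma TUPc cs : all (closed_at 0) cs -> closed_at 0 (TUP cs).
Proof. move=> h; rewrite /TUP /=; apply: closed_apps => //; elim: cs h => //= c cs IH /andP[h1 h2]; by rewrite closed0 // IH. Qed.

Lemma TUP_eq cs : TUP cs = Lam (apps (Var 0) cs). Proof. by []. Qed.
Lemma STEP_eq k : STEP k = Lam (Lam (App (Var 1) (App (MAPS k) (Var 0)))). Proof. by []. Qed.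
Lemma INIT_eq k : INIT k = TUP (nseq k (church 0)). Proof. by []. Qed.
Opaque TUP STEP.
Lemma STEP_red k cs : all (closed_at 0) cs -> size cs = k ->
  betaeta (App (STEP k) (TUP cs)) (TUP (map (App SUCC) cs)).
Proof.
move=> hc hs; have h1 := TUPc hc; have h2 := MAPSc k.
change (betaeta (apps (STEP k) [:: TUP cs]) (TUP (map (App SUCC) cs))).
rewrite STEP_eq; bstep. rewrite /apps /= [TUP (map _ _)]TUP_eq; apply: be_lam.
rewrite !TUP_eq; apply: be_trans (be_beta _ _) _.
rewrite subst_apps /= map_subst_closed //.
exact: MAPS_red.
Qed.

Lemma all_nseq_closed k c : closed_at 0 c -> all (closed_at 0) (nseq k c).
Proof. move=> h; elim: k => //= k ->; by rewrite h. Qed.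

Lemma iter_STEP k n : betaeta (iter n (App (STEP k)) (INIT k)) (TUP (nseq k (church n))).
Proof.
elim: n => [|n IH]; first exact: be_refl.
rewrite iterS; apply: be_trans (be_appr _ IH) _.
apply: be_trans (STEP_red _ _) _.
- exact: all_nseq_closed (closed_church n).
- by rewrite size_nseq.
rewrite map_nseq !TUP_eq; apply: be_lam; apply: be_apps_nseq; exact: succ_church.
Qed.

Definition CV k i := Lam (Lam (App (App (App (Var 1) (STEP k)) (INIT k)) (App (PJ k i) (Var 0)))).
Lemma INITc k : closed_at 0 (INIT k).
Proof. apply: TUPc; exact: all_nseq_closed (closed_church 0). Qed.
Lemma CVc k i : closed_at 0 (CV k i).
Proof. by rewrite /CV /= !(closed0 _ (STEPc _)) !(closed0 _ (INITc _)) !(closed0 _ (PJc _ _)). Qed.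

Lemma CV_eq k i : CV k i = Lam (Lam (App (App (App (Var 1) (STEP k)) (INIT k)) (App (PJ k i) (Var 0)))).
Proof. by []. Qed.
Opaque INIT CV.

Lemma CV_red k i n K : i < k ->
  betaeta (apps (CV k i) [:: church n; K]) (App K (church n)).
Proof.
move=> hi; have h1 := STEPc k; have h2 := INITc k; have h3 := PJc k i; have h4 := closed_church n.
rewrite CV_eq; bstep. bstep.
rewrite /apps /=.
apply: be_trans (be_appl _ (church_it _ _ _)) _.
apply: be_trans (be_appl _ (iter_STEP _ _)) _.
rewrite !TUP_eq; apply: be_trans (be_beta _ _) _.
rewrite subst_apps /= map_subst_closed; last exact: all_nseq_closed.
rewrite -apps_cons; apply: be_trans (PJ_red K hi _) _; first exact: size_nseq.
rewrite nth_nseq hi; exact: be_refl.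
Qed.
Arguments apps : simpl never.
Arguments church : simpl never.
Opaque SUCC church TUP STEP INIT CV.

Fixpoint GAM m := match m with 0 => Lam (Lam (App (Var 0) (Var 1)))
  | m'.+1 => Lam (Lam (Lam (App (App (GAM m') (Lam (App (App (Var 3) (Var 0)) (Var 1)))) (Var 1)))) end.
Lemma GAMc m : closed_at 0 (GAM m).
Proof. elim: m => //= m IH; by rewrite !(closed0 _ IH). Qed.

Lemma GAM_red m h v xs : closed_at 0 h -> closed_at 0 v -> all (closed_at 0) xs -> size xs = m ->
  betaeta (apps (GAM m) [:: h, v & xs]) (App v (Lam (apps (App h (Var 0)) xs))).
Proof.
elim: m h v xs => [|m IH] h v [|x xs] //= hh hv.
- move=> _ _; bstep. bstep. rewrite /apps /=; apply: be_appr; apply: be_sym.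
  have := be_eta h; by rewrite (lift_closed0 1 0 hh).
- case/andP=> hx hxs [hs]; have h1 := GAMc m.
  bstep. bstep. bstep.
  have hh' : closed_at 0 (Lam (App (App h (Var 0)) x)) by rewrite /= (closed0 _ hh) (closed0 _ hx).
  apply: be_trans (IH _ _ _ hh' hv hxs hs) _.
  apply: be_appr; apply: be_lam; apply: be_apps.
  apply: be_trans (be_beta _ _) _; rewrite /=; clo; exact: be_refl.
Qed.

Fixpoint CP p := match p with 0 => Lam (Lam (App (Var 1) (Var 0)))
  | p'.+1 => Lam (Lam (Lam (App (App (CP p') (Var 2)) (App (Var 1) (Var 0))))) end.
Lemma CPc p : closed_at 0 (CP p).
Proof. elim: p => //= p IH; by rewrite !(closed0 _ IH). Qed.

Lemma CP_red p c h ys : size ys = p ->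
  betaeta (apps (CP p) [:: c, h & ys]) (App c (apps h ys)).
Proof.
elim: p c h ys => [|p IH] c h [|y ys] //=.
- move=> _; bstep. bstep. exact: be_refl.
- case=> hs; have h1 := CPc p.
  bstep. bstep. bstep. exact: IH.
Qed.

Fixpoint FL n := match n with 0 => Lam (Lam (App (Var 1) (Var 0)))
  | n'.+1 => Lam (Lam (Lam (App (App (FL n') (App (Var 2) (Var 0))) (Var 1)))) end.
Lemma FLc n : closed_at 0 (FL n).
Proof. elim: n => //= n IH; by rewrite !(closed0 _ IH). Qed.

Lemma FL_red n q a us : size us = n ->
  betaeta (apps (FL n) [:: q, a & us]) (App (apps q us) a).
Proof.
elim: n q a us => [|n IH] q a [|u us] //=.
- move=> _; bstep. bstep. exact: be_refl.
- case=> hs; have h1 := FLc n.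
  bstep. bstep. bstep. exact: IH.
Qed.
Arguments apps : simpl never.
Arguments church : simpl never.
Opaque SUCC church TUP STEP INIT CV.

Definition ZZ n1 := Lam (App (DROP n1.-1) (Var 0)).
Definition SS n1 := FL n1.-1.
Lemma ZZc n1 : closed_at 0 (ZZ n1). Proof. by rewrite /ZZ /= (closed0 _ (DROPc _)). Qed.
Lemma SSc n1 : closed_at 0 (SS n1). Proof. exact: FLc. Qed.
Opaque ZZ SS.
Lemma ZZ_eq n1 : ZZ n1 = Lam (App (DROP n1.-1) (Var 0)). Proof. by []. Qed.

Lemma sel_red n1 m us : m < n1 -> size us = n1 ->
  betaeta (apps (iter m (App (SS n1)) (ZZ n1)) us) (nth (Var 0) us m).
Proof.
elim: m us => [|m IH] [|u us] //= hm hs; try by subst n1.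
- have h1 := DROPc n1.-1. rewrite ZZ_eq; bstep.
  apply: (DROP_red u). by rewrite -hs.
- rewrite apps_cons.
  change (betaeta (apps (FL n1.-1) [:: iter m (App (SS n1)) (ZZ n1), u & us]) (nth (Var 0) us m)).
  apply: be_trans (FL_red _ _ _) _; first by rewrite -hs.
  rewrite -apps_rcons; apply: be_trans (IH _ _ _) _.
  + lia.
  + by rewrite size_rcons.
  rewrite nth_rcons; have -> : m < size us by lia. exact: be_refl.
Qed.

Definition SELC n1 INH := Lam (apps (App (App (Var 0) (App (CP (size INH)) (SS n1))) (App (DROP (size INH)) (ZZ n1))) INH).
Lemma SELCc n1 INH : all (closed_at 0) INH -> closed_at 0 (SELC n1 INH).
Proof.
move=> h; rewrite /SELC /=; apply: closed_apps.
- by rewrite /= (closed0 _ (CPc _)) (closed0 _ (SSc _)) (closed0 _ (DROPc _)) (closed0 _ (ZZc _)).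
- elim: INH h => //= c cs IH /andP[h1 h2]; by rewrite (closed0 _ h1) IH.
Qed.

Lemma SELC_iter n1 INH m : 
  betaeta (apps (iter m (App (App (CP (size INH)) (SS n1))) (App (DROP (size INH)) (ZZ n1))) INH)
          (iter m (App (SS n1)) (ZZ n1)).
Proof.
elim: m => [|m IH] /=.
- exact: (DROP_red (ZZ n1)).
- change (betaeta (apps (CP (size INH)) [:: SS n1, iter m (App (App (CP (size INH)) (SS n1))) (App (DROP (size INH)) (ZZ n1)) & INH]) (App (SS n1) (iter m (App (SS n1)) (ZZ n1)))).
  apply: be_trans (CP_red _ _ _) _; first by [].
  exact: be_appr.
Qed.

Lemma SELC_red n1 INH m : all (closed_at 0) INH ->
  betaeta (App (SELC n1 INH) (church m)) (iter m (App (SS n1)) (ZZ n1)).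
Proof.
move=> h; rewrite /SELC; apply: be_trans (be_beta _ _) _.
rewrite subst_apps map_subst_closed // /=.
have h1 := CPc (size INH); have h2 := SSc n1; have h3 := DROPc (size INH); have h4 := ZZc n1.
clo.
apply: be_trans (be_apps _ (church_it _ _ _)) _.
exact: SELC_iter.
Qed.

Fixpoint W (k : nat) (S : tm) (i n : nat) := match n with 0 => S
  | n'.+1 => Lam (Lam (App (App (GAM n') (Lam (App (W k S i.+1 n') (App (Var 2) (Var 0))))) (App (CV k i) (Var 0)))) end.
Lemma Wc k S i n : closed_at 0 S -> closed_at 0 (W k S i n).
Proof.
move=> hS; elim: n i => //= n IH i.
by rewrite (closed0 _ (GAMc _)) (closed0 _ (IH _)) (closed0 _ (CVc _ _)).
Qed.

Lemma all_map_church ns : all (closed_at 0) (map church ns).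
Proof. elim: ns => //= n ns ->; by rewrite closed_church. Qed.

Lemma W_red k S i n F ns : closed_at 0 S -> closed_at 0 F -> i + n = k -> size ns = n ->
  betaeta (apps (W k S i n) (F :: map church ns)) (App S (apps F (map church ns))).
Proof.
elim: n i F ns => [|n IH] i F [|m ns] //= hS hF hk hs.
- exact: be_refl.
- case: hs => hs.
  have h1 := GAMc n; have h2 := Wc k i.+1 n hS; have h3 := CVc k i; have h4 := closed_church m.
  bstep. bstep.
  have hh : closed_at 0 (Lam (App (W k S i.+1 n) (App F (Var 0)))).
    by rewrite /= (closed0 _ h2) (closed0 _ hF).
  have hv : closed_at 0 (App (CV k i) (church m)) by rewrite /= h3 h4.
  change (betaeta (apps (GAM n) [:: Lam (App (W k S i.+1 n) (App F (Var 0))), App (CV k i) (church m) & map church ns])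
     (App S (apps F (church m :: map church ns)))).
  apply: be_trans (GAM_red hh hv (all_map_church _) _) _; first by rewrite size_map.
  apply: be_trans (CV_red m (Lam (apps (App (Lam (App (W k S i.+1 n) (App F (Var 0)))) (Var 0)) (map church ns))) _) _; first lia.
  apply: be_trans (be_beta _ _) _.
  rewrite subst_apps map_subst_closed ?all_map_church //=.
  clo.
  apply: be_trans (be_apps _ (be_beta _ _)) _.
  rewrite /=; clo.
  have hF' : closed_at 0 (App F (church m)) by rewrite /= hF h4.
  apply: be_trans (IH _ _ _ hS hF' _ hs) _; first lia.
  exact: be_refl.
Qed.
Arguments apps : simpl never.
Arguments church : simpl never.
Opaque SUCC church TUP STEP INIT CV ZZ SS.

Definition lams n B := iter n Lam B.
Fixpoint ovars n := match n with 0 => [::] | n'.+1 => Var n' :: ovars n' end.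
Definition Vj n1 j := apps (App (iter j (App (Var (n1 + 2))) (Var (n1 + 1))) (Var n1)) (ovars n1).
Definition Vs n1 := mkseq (Vj n1) n1.
Definition COMB n1 := Lam (Lam (Lam (Lam (lams n1 (apps (Var (n1 + 3)) (Vs n1)))))).

Lemma ovarsS n : ovars n.+1 = rcons (map (lift 1 0) (ovars n)) (Var 0).
Proof. elim: n => //= n ->; by rewrite addn1. Qed.

Lemma be_lams n B B' : betaeta B B' -> betaeta (lams n B) (lams n B').
Proof. move=> h; elim: n => //= n IH; exact: be_lam. Qed.

Lemma lamsS n B : lams n.+1 B = lams n (Lam B).
Proof. by rewrite /lams iterSr. Qed.

Lemma eta_lams n u : betaeta (lams n (apps (lift n 0 u) (ovars n))) u.
Proof.
elim: n u => [|n IH] u.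
- rewrite /lams /= lift0; exact: be_refl.
- rewrite lamsS ovarsS apps_rcons.
  have -> : lift n.+1 0 u = lift 1 0 (lift n 0 u) by rewrite lift_lift0 addn1.
  rewrite -lift_apps.
  apply: be_trans (be_lams _ (be_eta _)) _.
  exact: IH.
Qed.

Lemma subst_lams n j s B : closed_at 0 s -> subst j s (lams n B) = lams n (subst (j + n) s B).
Proof.
move=> hs; elim: n j => [|n IH] j; first by rewrite addn0.
rewrite /lams /= -/(lams n B) lift_closed0 // IH; by rewrite addSnnS.
Qed.

Lemma ovars_closed n1 d : n1 <= d -> all (closed_at d) (ovars n1).
Proof. elim: n1 => //= n IH h; apply/andP; split; [lia| apply: IH; lia]. Qed.

Lemma Vj_closed n1 j : closed_at (n1 + 3) (Vj n1 j).
Proof.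
rewrite /Vj; apply: closed_apps; last by apply: ovars_closed; lia.
rewrite /=; apply/andP; split; last lia.
apply: closed_iter => /=; lia.
Qed.

Lemma COMB_red n1 W0 : closed_at 0 W0 ->
  betaeta (App (COMB n1) W0) (Lam (Lam (Lam (lams n1 (apps W0 (Vs n1)))))).
Proof.
move=> hw; apply: be_trans (be_beta _ _) _; rewrite /=; clo.
rewrite subst_lams // subst_apps /=.
have -> : (n1 + 3 == 3 + n1) by rewrite addnC.
have -> : map (subst (3 + n1) W0) (Vs n1) = Vs n1.
  rewrite /Vs /mkseq -map_comp; apply: eq_map => j /=.
  apply: subst_closed (Vj_closed n1 j) _; lia.
exact: be_refl.
Qed.

Lemma final_eta n1 m : betaeta (Lam (Lam (Lam (lams n1 (Vj n1 m))))) (church m).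
Proof.
rewrite church_eq; apply: be_lam; apply: be_lam.
set Y := iter m (App (Var 1)) (Var 0).
have -> : Vj n1 m = apps (lift n1 0 (App (lift 1 0 Y) (Var 0))) (ovars n1).
  rewrite /Vj /= lift_lift0 /Y !lift_iter /=.
  have e1 : 1 + (1 + n1) = n1 + 2 by lia. have e2 : 0 + (1 + n1) = n1 + 1 by lia. by rewrite e1 e2 add0n.
apply: be_trans; first (apply: be_lam; exact: eta_lams).
exact: be_eta.
Qed.

Lemma full_red k n1 INH E0 ns m : closed_at 0 E0 -> all (closed_at 0) INH -> size ns = k -> m < n1 ->
  betaeta (apps E0 (map church ns)) (church m) ->
  betaeta (apps (App (App (CP k) (COMB n1)) (App (W k (SELC n1 INH) 0 k) E0)) (map church ns)) (church m).
Proof.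
move=> hE hI hs hm hrep.
have hS := SELCc n1 hI.
change (betaeta (apps (CP k) [:: COMB n1, App (W k (SELC n1 INH) 0 k) E0 & map church ns]) (church m)).
apply: be_trans (CP_red _ _ _) _; first by rewrite size_map.
apply: be_trans (be_appr _ (W_red hS hE _ hs)) _; first by [].
apply: be_trans (be_appr _ (be_appr _ hrep)) _.
have hc : closed_at 0 (App (SELC n1 INH) (church m)) by apply/andP; split; [exact: hS|exact: closed_church].
apply: be_trans (COMB_red _ hc) _.
apply: be_trans _ (final_eta n1 m).
apply: be_lam; apply: be_lam; apply: be_lam; apply: be_lams.
apply: be_trans (be_apps _ (SELC_red _ _ hI)) _.
apply: be_trans (sel_red hm _) _; first by rewrite size_mkseq.
rewrite /Vs nth_mkseq //; exact: be_refl.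
Qed.
Arguments apps : simpl never.
Arguments church : simpl never.

Lemma lookup_cat G D n A : lookup G n = Some A -> lookup (G ++ D) n = Some A.
Proof. elim: G n => [|B G IH] [|n] //=; exact: IH. Qed.

Lemma weaken G D t A : has_type G t A -> has_type (G ++ D) t A.
Proof.
elim=> {G t A} [G n A h|G u v A B _ IH1 _ IH2|G u A B _ IH].
- apply: ht_var; exact: lookup_cat.
- exact: ht_app IH1 IH2.
- apply: ht_lam; exact: IH.
Qed.

Lemma weaken0 G t A : has_type [::] t A -> has_type G t A.
Proof. move=> h; exact: (weaken G h). Qed.

Lemma lookup_size G n A : lookup G n = Some A -> n < size G.
Proof. elim: G n => [|B G IH] [|n] //=; exact: IH. Qed.

Lemma typing_closed G t A : has_type G t A -> closed_at (size G) t.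
Proof.
elim=> {G t A} [G n A h|G u v A B _ IH1 _ IH2|G u A B _ IH] /=.
- exact: lookup_size h.
- by rewrite IH1 IH2.
- exact: IH.
Qed.

Fixpoint tsub (r : ty) (A : ty) : ty :=
  match A with TO => r | Arr a b => Arr (tsub r a) (tsub r b) end.

Lemma lookup_map r G n : lookup (map (tsub r) G) n = omap (tsub r) (lookup G n).
Proof. elim: G n => [|B G IH] [|n] //=. Qed.

Lemma typing_tsub r G t A : has_type G t A -> has_type (map (tsub r) G) t (tsub r A).
Proof.
elim=> {G t A} [G n A h|G u v A B _ IH1 _ IH2|G u A B _ IH].
- apply: ht_var; by rewrite lookup_map h.
- exact: ht_app IH1 IH2.
- apply: ht_lam; exact: IH.
Qed.

Lemma tsub_arrows r As B : tsub r (arrows As B) = arrows (map (tsub r) As) (tsub r B).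
Proof. by elim: As => //= A As ->. Qed.

Fixpoint tl_typed G (args : seq tm) (As : seq ty) : Prop :=
  match args, As with
  | [::], [::] => True
  | a :: args', A :: As' => has_type G a A /\ tl_typed G args' As'
  | _, _ => False end.

Lemma ht_apps G h args As B : has_type G h (arrows As B) -> tl_typed G args As ->
  has_type G (apps h args) B.
Proof.
elim: args As h => [|a args IH] [|A As] h //= hh.
case=> ha hr; rewrite apps_cons; apply: IH hr; exact: ht_app hh ha.
Qed.

Lemma ht_lams n G B C : has_type (nseq n TO ++ G) B C -> has_type G (lams n B) (arrows (nseq n TO) C).
Proof.
elim: n G => [|n IH] G //= h.
rewrite /lams /= -/(lams n B); apply: ht_lam; apply: IH.
have e : rcons (nseq n TO) TO = nseq n.+1 TO by clear; elim: n => //= n ->.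
by rewrite -cat_rcons e.
Qed.
Transparent SUCC church TUP STEP INIT CV ZZ SS.

Ltac ty := match goal with
 | |- has_type _ (Lam _) _ => eapply ht_lam; ty
 | |- has_type _ (Var _) _ => eapply ht_var; reflexivity
 | |- has_type _ (App _ _) _ => eapply ht_app; [ty | ty]
 | _ => idtac
 end.

Lemma T_SUCC A : has_type [::] SUCC (Arr (omega A) (omega A)).
Proof. rewrite /SUCC /omega. ty. Qed.

Lemma T_church0 A : has_type [::] (church 0) (omega A).
Proof. rewrite /church /omega /=. ty. Qed.

Lemma T_MAPS Us R : has_type [::] (MAPS (size Us)) (Arr (arrows (map omega Us) R) (arrows (map omega Us) R)).
Proof.
elim: Us => [|U Us IH] /=; first by ty.
ty. apply: weaken0; exact: IH. apply: weaken0; exact: T_SUCC.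
Qed.

Lemma T_DROP A Us : has_type [::] (DROP (size Us)) (Arr A (arrows Us A)).
Proof.
elim: Us => [|U Us IH] /=; first by ty.
ty. apply: weaken0; exact: IH.
Qed.

Lemma T_PJ Us i R : i < size Us -> has_type [::] (PJ (size Us) i) (Arr (Arr (nth TO Us i) R) (arrows Us R)).
Proof.
elim: i Us => [|i IH] [|U Us] //= hi.
- ty. apply: weaken0; exact: T_DROP.
- ty. apply: weaken0; exact: IH.
Qed.

Definition tT Ts R := Arr (arrows (map omega Ts) R) R.

Lemma T_INIT Ts R : has_type [::] (INIT (size Ts)) (tT Ts R).
Proof.
rewrite /INIT /TUP /tT; apply: ht_lam; apply: ht_apps; first by apply: ht_var.
move: (arrows _ R) => X.
elim: Ts [:: X] => //= T Ts IH G; split; last exact: IH.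
apply: weaken0; exact: T_church0.
Qed.

Lemma T_STEP Ts R : has_type [::] (STEP (size Ts)) (Arr (tT Ts R) (tT Ts R)).
Proof. rewrite /STEP /tT. ty. apply: weaken0; exact: T_MAPS. Qed.

Lemma T_CV Ts R i : i < size Ts ->
  has_type [::] (CV (size Ts) i) (Arr (omega (tT Ts R)) (Arr (Arr (omega (nth TO Ts i)) R) R)).
Proof.
move=> hi; rewrite /CV /omega. ty.
- apply: weaken0; exact: T_STEP.
- apply: weaken0; exact: T_INIT.
- apply: weaken0. have := T_PJ R (Us := map omega Ts) (i := i). rewrite size_map (nth_map TO) //. exact.
Qed.

Lemma T_GAM m N X R : has_type [::] (GAM m)
  (Arr (Arr N (arrows (nseq m X) R)) (Arr (Arr (Arr N R) R) (arrows (nseq m X) R))).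
Proof.
elim: m => [|m IH] /=; first by ty.
ty. apply: weaken0; exact: IH.
Qed.

Lemma T_CP Us A B : has_type [::] (CP (size Us)) (Arr (Arr A B) (Arr (arrows Us A) (arrows Us B))).
Proof.
elim: Us => [|U Us IH] /=; first by ty.
ty. apply: weaken0; exact: IH.
Qed.

Definition Sel n A := arrows (nseq n A) A.

Lemma T_FL n A : has_type [::] (FL n) (Arr (Sel n.+1 A) (Sel n.+1 A)).
Proof.
rewrite /Sel; elim: n => [|n IH] /=; first by ty.
ty. apply: weaken0; exact: IH.
Qed.

Lemma T_ZZ n1 A : 0 < n1 -> has_type [::] (ZZ n1) (Sel n1 A).
Proof.
case: n1 => // n _; rewrite /ZZ /Sel /=. ty.
apply: weaken0; have := T_DROP A (nseq n A); by rewrite size_nseq.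
Qed.

Lemma T_SS n1 A : 0 < n1 -> has_type [::] (SS n1) (Arr (Sel n1 A) (Sel n1 A)).
Proof. case: n1 => // n _; exact: T_FL. Qed.

Fixpoint inh (z : tm) (A : ty) : tm := match A with TO => z | Arr _ b => Lam (inh z b) end.

Lemma T_inh z r A : has_type [::] z r -> has_type [::] (inh z A) (tsub r A).
Proof.
move=> hz; elim: A => [|a _ b IH] //=; apply: ht_lam; exact: weaken0.
Qed.

Lemma inh_closed z A : closed_at 0 z -> closed_at 0 (inh z A).
Proof. move=> hz; elim: A => [|a _ b IH] //=; exact: closed0. Qed.

Lemma T_inhs G z r As : has_type [::] z r -> tl_typed G (map (inh z) As) (map (tsub r) As).
Proof. move=> hz; elim: As => //= a As IH; split => //; apply: weaken0; exact: T_inh. Qed.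

Fixpoint targs (A : ty) : seq ty := match A with TO => [::] | Arr a b => a :: targs b end.
Lemma targsK A : A = arrows (targs A) TO.
Proof. by elim: A => //= a _ b <-. Qed.

Lemma T_SELC n1 sg : 0 < n1 ->
  has_type [::] (SELC n1 (map (inh (ZZ n1)) (targs sg)))
    (Arr (omega (tsub (Sel n1 TO) sg)) (Sel n1 TO)).
Proof.
move=> hn; set r := Sel n1 TO.
have e : tsub r sg = arrows (map (tsub r) (targs sg)) r by rewrite {1}(targsK sg) tsub_arrows.
rewrite e /SELC /omega; apply: ht_lam; apply: ht_apps.
- ty.
  + apply: weaken0; have := T_CP (map (tsub r) (targs sg)) r r; rewrite !size_map; exact.
  + apply: weaken0; exact: T_SS.
  + apply: weaken0; have := @T_DROP r (map (tsub r) (targs sg)); rewrite !size_map; exact.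
  + apply: weaken0; exact: T_ZZ.
- apply: T_inhs; exact: T_ZZ.
Qed.

Lemma T_W Ts sg R S n i : has_type [::] S (Arr (omega sg) R) -> i + n = size Ts ->
  has_type [::] (W (size Ts) S i n)
    (Arr (arrows (map omega (drop i Ts)) (omega sg)) (arrows (nseq n (omega (tT Ts R))) R)).
Proof.
move=> hS; elim: n i => [|n IH] i hi /=.
- by rewrite drop_oversize // -hi addn0.
- have hi' : i < size Ts by lia.
  rewrite (drop_nth TO hi') /=. ty.
  + apply: weaken0; exact: T_GAM.
  + apply: weaken0; apply: IH; lia.
  + apply: weaken0; exact: T_CV.
Qed.

Lemma lookup_nseq_lt n L i : i < n -> lookup (nseq n TO ++ L) i = Some TO.
Proof. elim: n i => [|n IH] [|i] //= h; exact: IH. Qed.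
Lemma lookup_nseq_ge n L i : lookup (nseq n TO ++ L) (n + i) = lookup L i.
Proof. by elim: n => //= n IH; rewrite addSn. Qed.

Lemma lookup_nseq_eq n L x : lookup (nseq n TO ++ x :: L) n = Some x.
Proof. by elim: n. Qed.

Lemma T_ovars L m n : n <= m -> tl_typed (nseq m TO ++ L) (ovars n) (nseq n TO).
Proof.
elim: n => //= n IH hn; split; last by apply: IH; lia.
apply: ht_var; apply: lookup_nseq_lt; lia.
Qed.

Lemma tl_map_nseq G (f : nat -> tm) js : (forall j, j \in js -> has_type G (f j) TO) ->
  tl_typed G (map f js) (nseq (size js) TO).
Proof.
elim: js => [|j js IH] h //=; split; first by apply: h; exact: mem_head.
apply: IH => x hx; apply: h; by rewrite in_cons hx orbT.
Qed.

Lemma T_COMB n1 Gt : has_type [::] (COMB n1)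
  (Arr (Sel n1 TO) (omega (Arr Gt (Sel n1 TO)))).
Proof.
rewrite /COMB /omega; do 4 apply: ht_lam.
apply: ht_lams; apply: ht_apps.
- apply: ht_var. rewrite (lookup_nseq_ge n1 _ 3). by [].
- rewrite /Vs /mkseq.
  have : forall j, j \in iota 0 n1 -> has_type (nseq n1 TO ++ [:: Gt; Arr Gt (Sel n1 TO); Arr (Arr Gt (Sel n1 TO)) (Arr Gt (Sel n1 TO)); Sel n1 TO]) (Vj n1 j) TO.
    move=> j _; rewrite /Vj; apply: ht_apps.
    + apply: (ht_app (A := Gt)); last by apply: ht_var; rewrite lookup_nseq_eq.
      elim: j => [|j IH] /=.
      * apply: ht_var; by rewrite (lookup_nseq_ge n1 _ 1).
      * apply: (ht_app (A := Arr Gt (Sel n1 TO))) => //; apply: ht_var; by rewrite (lookup_nseq_ge n1 _ 2).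
    + exact: T_ovars.
  move=> h; have := tl_map_nseq h; by rewrite size_iota.
Qed.

Definition unom (A : ty) : ty := match A with Arr (Arr t _) _ => t | _ => TO end.

Lemma numeral_omega A : numeral_type A -> A = omega (unom A).
Proof.
move=> h; have := h 2; rewrite church_eq /= => H.
inversion H; subst; clear H.
match goal with H : has_type _ (Lam _) _ |- _ => inversion H; subst; clear H end.
match goal with H : has_type _ (App _ _) _ |- _ => inversion H; subst; clear H end.
repeat match goal with H : has_type _ (App _ _) _ |- _ => inversion H; subst; clear H end.
repeat match goal with H : has_type _ (Var _) _ |- _ => inversion H; subst; clear H end.
move: H1 H4 H2 => /= [<-] [->] [e1 e2]; subst; by [].
Qed.

Lemma le_foldr_max s x : x \in s -> x <= foldr maxn 0 s.
Proof.
elim: s => //= y s IH; rewrite in_cons => /orP [/eqP ->|h]; first exact: leq_maxl.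
apply: leq_trans (IH h) _; exact: leq_maxr.
Qed.

Lemma map_unom (s : seq ty) : (forall i, i < size s -> numeral_type (nth TO s i)) ->
  s = map omega (map unom s).
Proof.
elim: s => //= a s IH h; congr cons; first by apply: numeral_omega; exact: (h 0).
apply: IH => i hi; exact: (h i.+1).
Qed.

Theorem theorem4 (k : nat) (f : k.-tuple nat -> nat) :
  skewly_representable f -> finite_range f -> strictly_representable f.
Proof.
case=> E [al [b [Hal [Hb [HE Hrep]]]]] [s Hs].
pose n1 := (foldr maxn 0 s).+1.
have HM : forall x, f x < n1 by move=> x; rewrite ltnS; apply: le_foldr_max.
have hn1 : 0 < n1 by [].
pose r := Sel n1 TO.
pose Ts := map unom al.
pose sg := unom b.
have Hal' : (val al : seq ty) = map omega Ts.
  apply: map_unom => i hi.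
  have hi' : i < k by rewrite size_tuple in hi.
  have := Hal (Ordinal hi'); by rewrite (tnth_nth TO).
have Hb' : b = omega sg by exact: numeral_omega.
pose Ts' := map (tsub r) Ts.
have hsz : size Ts' = k by rewrite /Ts' /Ts !size_map size_tuple.
have HE' : has_type [::] E (arrows (map omega Ts') (omega (tsub r sg))).
  have := typing_tsub r HE; rewrite /= tsub_arrows Hal' Hb' -!map_comp.
  move=> h; exact: h.
pose INH := map (inh (ZZ n1)) (targs sg).
pose Tt := tT Ts' r.
exists (App (App (CP k) (COMB n1)) (App (W k (SELC n1 INH) 0 k) E)), Tt.
split.
- apply: (ht_app (A := arrows (nseq k (omega Tt)) r)).
  + apply: (ht_app (A := Arr r (omega Tt))).
    * have := T_CP (nseq k (omega Tt)) r (omega Tt); by rewrite size_nseq.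
    * exact: T_COMB.
  + apply: (ht_app (A := arrows (map omega Ts') (omega (tsub r sg)))); last exact: HE'.
    have TW : forall Ts0 k0, size Ts0 = k0 -> has_type [::] (W k0 (SELC n1 INH) 0 k0)
       (Arr (arrows (map omega Ts0) (omega (tsub r sg))) (arrows (nseq k0 (omega (tT Ts0 r))) r)).
      move=> Ts0 k0 <-; have := @T_W Ts0 (tsub r sg) r (SELC n1 INH) (size Ts0) 0 (T_SELC sg hn1).
      rewrite drop0; by apply.
    exact: TW hsz.
- move=> x; apply: full_red.
  + exact: (typing_closed HE).
  + rewrite /INH; elim: (targs sg) => //= a As ->; by rewrite inh_closed // ZZc.
  + exact: size_tuple.
  + exact: HM.
  + exact: Hrep.
Qed.
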